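(* For any p-string $T$ of length $n$, the parameterized suffix tray $\mathsf{PSTray}(T)$ occupies $O(n)$ space (in machine words).
   Context: $\Sigma$ (static alphabet) and $\Pi$ (parameterized alphabet) are disjoint ordered alphabets, every character of $\Pi$ being smaller than every character of $\Sigma$; a p-string is a string over $\Sigma\cup\Pi$. $T$ ends with $\$\in\Sigma$, occurring nowhere else and larger than all other characters. $\Pi_T$, $\Sigma_T$ are the sets of characters of $\Pi$, $\Sigma$ occurring in $T$; $\pi=|\Pi_T|$, $\sigma=|\Sigma_T|$. For $x\in\Pi_T\cup\Sigma_T$, $\mathrm{rank}(x)$ is the rank of $x$ in $\Pi_T\cup\Sigma_T$ (so ranks lie in $\{1,\dots,\sigma+\pi\}$). Two p-strings $x,y$ of equal length p-match ($x\approx y$) if there is a bijection $f$ on $\Sigma\cup\Pi$ which is the identity on $\Sigma$ with $x[i]=f(y[i])$ for all $i$. $\mathrm{spe}(w)$ is the lexicographically smallest p-string p-matching $w$. $\mathrm{prev}(w)$ is the string of length $|w|$ with $\mathrm{prev}(w)[i]=w[i]$ if $w[i]\in\Sigma$, $0$ if $w[i]\in\Pi$ does not occur in $w[1..i-1]$, and otherwise $i-j$ for the largest $j<i$ with $w[j]=w[i]$. $\mathsf{PSTree}(T)$ is the compact trie of $\{\mathrm{prev}(T[i..]) : 1\le i\le |T|\}$ with leaves in lexicographic order. $\mathsf{PSA}(T)$ is the array with $\mathsf{PSA}(T)[i]=j$ iff $\mathrm{prev}(T[j..])$ is the $i$-th lexicographically smallest among $\{\mathrm{prev}(T[k..])\}$;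 $\mathsf{PLCP}(T)[1]=0$ and $\mathsf{PLCP}(T)[i]$ ($i\ge2$) is the length of the longest common prefix of $\mathrm{prev}(T[\mathsf{PSA}(T)[i-1]..])$ and $\mathrm{prev}(T[\mathsf{PSA}(T)[i]..])$. A node of $\mathsf{PSTree}(T)$ is a p-node if its subtree has at least $\max\{\sigma,\pi\}$ leaves, and a branching p-node if moreover at least two of its children are p-nodes. For a branching p-node $\mathrm{prev}(v)$ ($v$ a substring of $T$), its p-array $A(\mathrm{prev}(v))$ has length $\sigma+\pi$, and for each $x\in\Sigma_T\cup\Pi_T$ the entry $A(\mathrm{prev}(v))[\mathrm{rank}(x)]$ is a pointer to the child $u$ of $\mathrm{prev}(v)$ such that $\mathrm{prev}(\mathrm{spe}(v)x)$ is a prefix of (the string of) $u$, or nil if no such child exists. $\mathsf{PSTray}(T)$ consists of $\mathsf{PSA}(T)$, $\mathsf{PLCP}(T)$, and $\mathsf{PSTree}(T)$ with each branching p-node augmented by its p-array. *)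

(* Defs.v *)
From HB Require Import structures.
From mathcomp Require Import all_boot all_order.
Set Implicit Arguments. Unset Strict Implicit. Unset Printing Implicit Defensive.
Import Order.TTheory.
Local Open Scope order_scope.

(* p-strings: a character is [inl p] with p in the parameterized alphabet Pi
   (type P) or [inr s] with s in the static alphabet Sigma (type S).
   A character of prev(w) is [inl s] (static char s, kept as is) or
   [inr k] (the integer k). *)
Section PSTray.
Context {dP dS : Order.disp_t} {P : orderType dP} {S : orderType dS}.

Definition pchar := (P + S)%type.
Definition prevchar := (S + nat)%type.

(* prev(w)[i], 0-based position i, c = w[i]:
   static chars unchanged; a parameterized char gets 0 if it does not occur
   in w[0..i-1], and otherwise i - j for the largest j < i with w[j] = w[i]. *)
Definition prev_at (w : seq pchar) (i : nat) (c : pchar) : prevchar :=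
  match c with
  | inr s => inl s
  | inl p => if inl p \in take i w
             then inr (index (inl p) (rev (take i w))).+1
             else inr 0%N
  end.

Definition prevw (w : seq pchar) : seq prevchar :=
  map (fun ic : nat * pchar => prev_at w ic.1 ic.2) (zip (iota 0 (size w)) w).

(* the strings prev(T[i..]), 1 <= i <= |T|: the leaves of PSTree(T) *)
Definition prev_suffixes (T : seq pchar) : seq (seq prevchar) :=
  [seq prevw (drop i T) | i <- iota 0 (size T)].

Definition sigmaT (T : seq pchar) : nat :=
  size (undup (pmap (fun c : pchar => if c is inr s then Some s else None) T)).
Definition piT (T : seq pchar) : nat :=
  size (undup (pmap (fun c : pchar => if c is inl p then Some p else None) T)).

(* all prefixes of all leaf strings (the loci of the uncompacted trie) *)
Definition trie_loci (T : seq pchar) : seq (seq prevchar) :=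
  undup (flatten [seq [seq take k l | k <- iota 0 (size l).+1]
                 | l <- prev_suffixes T]).

Definition next_chars (T : seq pchar) (x : seq prevchar) : seq prevchar :=
  undup [seq nth (inr 0%N) l (size x)
        | l <- prev_suffixes T & prefix x l && (size x < size l)%N].

(* explicit nodes of the compact trie PSTree(T): the root, the leaves, and
   the branching internal loci *)
Definition is_node (T : seq pchar) (x : seq prevchar) : bool :=
  [|| x == [::], x \in prev_suffixes T | (2 <= size (next_chars T x))%N].

Definition pstree_nodes (T : seq pchar) : seq (seq prevchar) :=
  [seq x <- trie_loci T | is_node T x].

Definition sprefix (u v : seq prevchar) : bool := prefix u v && (size u < size v)%N.

Definition children (T : seq pchar) (v : seq prevchar) : seq (seq prevchar) :=
  [seq u <- pstree_nodes T | sprefix v u &&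
     ~~ has (fun w => sprefix v w && sprefix w u) (pstree_nodes T)].

Definition nleaves (T : seq pchar) (v : seq prevchar) : nat :=
  count (prefix v) (prev_suffixes T).

Definition is_pnode (T : seq pchar) (v : seq prevchar) : bool :=
  (maxn (sigmaT T) (piT T) <= nleaves T v)%N.

Definition is_branching_pnode (T : seq pchar) (v : seq prevchar) : bool :=
  is_pnode T v && (2 <= count (is_pnode T) (children T v))%N.

(* Space (in machine words) of PSTray(T):
   PSA(T) : |T| words, PLCP(T) : |T| words,
   PSTree(T) : a constant number of words per node (we count one word per node;
               constants are absorbed in the O(.)),
   p-arrays : sigma + pi words for each branching p-node. *)
Definition pstray_space (T : seq pchar) : nat :=
  (size T + size T + size (pstree_nodes T)
   + count (is_branching_pnode T) (pstree_nodes T) * (sigmaT T + piT T))%N.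

Definition valid_text (T : seq pchar) (dollar : S) : Prop :=
  exists T0 : seq pchar,
    [/\ T = rcons T0 (inr dollar), inr dollar \notin T0
      & forall s : S, inr s \in T0 -> s < dollar].

End PSTray.

(* Main.v *)
Require Import Defs.
From HB Require Import structures.
From mathcomp Require Import all_boot all_order.
From mathcomp Require Import zify.
Set Implicit Arguments. Unset Strict Implicit. Unset Printing Implicit Defensive.
Local Open Scope nat_scope.

Lemma count_sum (X : Type) (a : pred X) (s : seq X) :
  count a s = \sum_(x <- s) (a x : nat).
Proof. by elim: s => [|x s IH]; rewrite ?big_nil ?big_cons //= IH. Qed.

Lemma count_le3 (X : eqType) (P P1 P2 P3 : pred X) (s : seq X) :
  (forall x, x \in s -> P x -> [|| P1 x, P2 x | P3 x]) ->
  count P s <= count P1 s + count P2 s + count P3 s.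
Proof.
elim: s => //= x s IH H.
have H1 := H x (mem_head _ _).
have IH' := IH (fun y hy => H y (@mem_behead _ (x :: s) y hy)).
move: H1; case: (P x); case: (P1 x); case: (P2 x); case: (P3 x) => //= H1; try (by have := H1 isT); lia.
Qed.

Section S.
Context {dP dS : Order.disp_t} {P : orderType dP} {S : orderType dS}.
Variable T : seq (@pchar _ _ P S).

Local Notation L := (prev_suffixes T).
Local Notation N := (pstree_nodes T).
Local Notation nl := (nleaves T).
Local Notation A := (next_chars T).
Local Notation x0 := (inr 0%N : (S + nat)%type).

Lemma nl_mono v w : prefix v w -> nl w <= nl v.
Proof. move=> hvw; apply: sub_count => l /= hwl; exact: prefix_trans hvw hwl. Qed.

Lemma prefix_nth (v l : seq (S + nat)%type) i : prefix v l -> i < size v -> nth x0 l i = nth x0 v i.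
Proof. by move=> /prefixP [s ->] hi; rewrite nth_cat hi. Qed.

Lemma prefix_rcons_nth (v l : seq (S + nat)%type) : prefix v l -> size v < size l ->
  prefix (rcons v (nth x0 l (size v))) l.
Proof.
move=> hv hs; rewrite prefixE size_rcons (take_nth x0) //.
by move: hv; rewrite prefixE => /eqP ->.
Qed.

Lemma prefix_rcons_eq (v l : seq (S + nat)%type) a : prefix (rcons v a) l ->
  a = nth x0 l (size v) /\ prefix v l /\ size v < size l.
Proof.
move=> h; have hs := size_prefix h; rewrite size_rcons in hs.
split; last split => //; last by apply: prefix_trans h; exact: prefix_rcons.
by rewrite (prefix_nth h) ?size_rcons // nth_rcons ltnn eqxx.
Qed.

Lemma memA v a : a \in A v <-> exists l, [/\ l \in L, prefix v l, size v < size l & a = nth x0 l (size v)].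
Proof.
rewrite /next_chars mem_undup; split.
  by move=> /mapP [l]; rewrite mem_filter => /andP [/andP [h1 h2] h3] ->; exists l.
by move=> [l [h1 h2 h3 ->]]; apply: map_f; rewrite mem_filter h1 h2 h3.
Qed.

Lemma memA_nl v a : a \in A v -> 0 < nl (rcons v a).
Proof.
move=> /memA [l [hl hp hs ->]]; rewrite /nleaves -has_count; apply/hasP; exists l => //.
exact: prefix_rcons_nth.
Qed.

Lemma uniqA v : uniq (A v). Proof. exact: undup_uniq. Qed.

Lemma D1 v : \sum_(a <- A v) nl (rcons v a) <= nl v.
Proof.
rewrite /nleaves (count_sum (prefix v)).
under eq_bigr do rewrite count_sum.
rewrite exchange_big /=; apply: leq_sum => l _.
rewrite -count_sum.
case hv: (prefix v l).
  apply: leq_trans (_ : count (pred1 (nth x0 l (size v))) (A v) <= 1).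
    by apply: sub_count => a /= /prefix_rcons_eq [-> _].
  by rewrite count_uniq_mem ?uniqA // leq_b1.
rewrite leqn0 -(count_pred0 (A v)).
apply/eqP; apply: eq_count => a /=; apply/negbTE/negP => /prefix_rcons_eq [_ [h _]].
by rewrite h in hv.
Qed.

Lemma mem_loci x : x \in trie_loci T <-> exists l k, [/\ l \in L, k <= size l & x = take k l].
Proof.
rewrite /trie_loci mem_undup; split.
  move=> /flattenP [s /mapP [l hl ->]] /mapP [k]; rewrite mem_iota add0n ltnS => hk ->.
  by exists l, k.
move=> [l [k [hl hk ->]]]; apply/flattenP; exists [seq take k0 l | k0 <- iota 0 (size l).+1].
  exact: map_f.
by apply/mapP; exists k => //; rewrite mem_iota add0n ltnS.
Qed.

Lemma N_leaf w : w \in N -> exists2 l, l \in L & prefix w l.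
Proof.
rewrite mem_filter => /andP [_ /mem_loci [l [k [hl _ ->]]]].
by exists l => //; exact: prefix_take.
Qed.

Lemma uniqN : uniq N. Proof. exact/filter_uniq/undup_uniq. Qed.

Lemma D2 (Q : pred (seq (S + nat)%type)) v :
  count (fun w => Q w && prefix v w) N <=
  (Q v && (v \in N)) + \sum_(a <- A v) count (fun w => Q w && prefix (rcons v a) w) N.
Proof.
apply: (@leq_trans (count (fun w => Q w && (w == v)) N +
    \sum_(w <- N) count (fun a => Q w && prefix (rcons v a) w) (A v))).
  rewrite !count_sum -big_split /= big_seq_cond [X in _ <= X]big_seq_cond.
  apply: leq_sum => w /andP [hw _].
  case hQ: (Q w) => //=.
  case hp: (prefix v w) => //=.
  case: eqP => [//|hne]; rewrite add0n -has_count; apply/hasP.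
  have hs : size v < size w.
    rewrite ltn_neqAle size_prefix // andbT; apply/eqP => he; apply: hne.
    by move: hp; rewrite prefixE he take_size => /eqP.
  have [l hl hwl] := N_leaf hw.
  exists (nth x0 w (size v)); last exact: prefix_rcons_nth.
  apply/memA; exists l; split => //; first exact: prefix_trans hp hwl.
    by apply: leq_trans hs (size_prefix hwl).
  by rewrite (prefix_nth hwl hs).
apply: leq_add.
  case hQ: (Q v) => /=; last by rewrite leqn0 -(count_pred0 N); apply/eqP/eq_count => w /=; apply/negbTE/negP => /andP [hw /eqP e]; by rewrite e hQ in hw.
  rewrite -count_uniq_mem ?uniqN //; apply: sub_count => w /= /andP [_ /eqP ->]; exact: eqxx.
rewrite (eq_bigr (fun w => \sum_(a <- A v) ((Q w && prefix (rcons v a) w) : nat))); last by move=> w _; rewrite count_sum.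
rewrite exchange_big /=; apply: leq_sum => a _; by rewrite count_sum.
Qed.


Section Ind.
Variable Q : pred (seq (S + nat)%type).
Variable m : nat.
Hypothesis H1 : forall w, Q w -> m <= nl w.
Hypothesis H2 : forall v, Q v -> v \in N -> 2 <= count (fun a => m <= nl (rcons v a)) (A v).

Local Notation cnt v := (count (fun w => Q w && prefix v w) N).

Lemma cnt0 v : nl v < m -> cnt v = 0.
Proof.
move=> hv; apply/eqP; rewrite -leqn0 -(count_pred0 N) leq_eqVlt; apply/orP; left; apply/eqP.
apply: eq_count => w /=; apply/negbTE/negP => /andP [hq hp].
have := H1 hq; have := nl_mono hp; lia.
Qed.

Lemma step v : (forall a, a \in A v -> m <= nl (rcons v a) -> m * (cnt (rcons v a)).+1 <= nl (rcons v a)) ->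
  m <= nl v -> m * (cnt v).+1 <= nl v.
Proof.
move=> IH hv.
set S1 := \sum_(a <- A v) cnt (rcons v a).
set p := count (fun a => m <= nl (rcons v a)) (A v).
have E : m * S1 + m * p <= nl v.
  apply: leq_trans (D1 v).
  rewrite /S1 /p count_sum !big_distrr -big_split /= big_seq [X in _ <= X]big_seq.
  apply: leq_sum => a ha.
  case h: (m <= nl (rcons v a)).
    by have := IH a ha h; rewrite /=; lia.
  by rewrite cnt0 /=; lia.
have hD := D2 Q v; rewrite -/S1 in hD.
case hq: (Q v && (v \in N)).
  have hp : 2 <= p by move/andP: hq => [h1 h2]; exact: H2.
  rewrite hq /= in hD; nia.
rewrite hq /= in hD.
case: (posnP p) => hp0.
  have hS : S1 = 0.
    rewrite /S1 big_seq; apply: big1 => a ha; apply: cnt0; rewrite ltnNge; apply/negP => h.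
    have : has (fun a => m <= nl (rcons v a)) (A v) by apply/hasP; exists a.
    by rewrite has_count -/p hp0.
  rewrite hS in hD; have -> : cnt v = 0 by lia.
  by rewrite muln1.
nia.
Qed.

Lemma main_ind v : m <= nl v -> m * (cnt v).+1 <= nl v.
Proof.
set K := \max_(l <- L) size l.
have hA : forall w a, a \in A w -> size w < K.
  move=> w a /memA [l [hl _ hs _]]; apply: leq_trans hs _.
  exact: (@leq_bigmax_seq _ _ xpredT (fun l => size l) l hl).
suff : forall k w, K <= size w + k -> m <= nl w -> m * (cnt w).+1 <= nl w.
  by move=> /(_ K v); apply; lia.
elim=> [|k IHk] w hk; apply: step => a ha.
  by have := hA _ _ ha; lia.
by apply: IHk; rewrite size_rcons; lia.
Qed.

End Ind.

Lemma ex_diff (s t : seq (S + nat)%type) : ~~ prefix s t -> ~~ prefix t s ->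
  exists j, [/\ j < size s, j < size t, take j s = take j t & nth x0 s j != nth x0 t j].
Proof.
elim: s t => [|x s IH] [|y t] //; rewrite !prefix_cons.
case: (eqVneq x y) => [<-|hxy] /= h1 h2.
  have [j [hj1 hj2 hj3 hj4]] := IH t h1 h2.
  by exists j.+1; rewrite /= hj3.
by exists 0.
Qed.

Lemma children_mem v c : c \in children T v ->
  [/\ c \in N, sprefix v c & ~~ has (fun w => sprefix v w && sprefix w c) N].
Proof. by rewrite mem_filter => /andP [/andP [h1 h2] h3]. Qed.

Lemma prefix_size_eq (u w : seq (S + nat)%type) : prefix u w -> u != w -> size u < size w.
Proof.
move=> hp hne; rewrite ltn_neqAle size_prefix // andbT; apply/eqP => he.
by move: hp hne; rewrite prefixE he take_size => /eqP ->; rewrite eqxx.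
Qed.

Lemma child_diff v c1 c2 : c1 \in children T v -> c2 \in children T v -> c1 != c2 ->
  nth x0 c1 (size v) != nth x0 c2 (size v).
Proof.
move=> /children_mem [hN1 /andP [hv1 hs1] hc1] /children_mem [hN2 /andP [hv2 hs2] hc2] hne.
apply/negP => heq.
have np12 : ~~ prefix c1 c2.
  apply/negP => h; move/hasPn: hc2 => /(_ c1 hN1); rewrite /sprefix hv1 hs1 h.
  by rewrite prefix_size_eq.
have np21 : ~~ prefix c2 c1.
  apply/negP => h; move/hasPn: hc1 => /(_ c2 hN2); rewrite /sprefix hv2 hs2 h.
  by rewrite prefix_size_eq // eq_sym.
have [j [hj1 hj2 hj3 hj4]] := ex_diff np12 np21.
have hvj : size v < j.
  rewrite ltnNge; apply/negP => hle; move: hle; rewrite leq_eqVlt => /orP [/eqP e|hlt].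
    by move: hj4; rewrite e (eqP heq) eqxx.
  by move: hj4; rewrite (prefix_nth hv1 hlt) (prefix_nth hv2 hlt) eqxx.
have [l1 hl1 hp1] := N_leaf hN1.
have [l2 hl2 hp2] := N_leaf hN2.
set u := take j c1.
have hsu : size u = j by rewrite size_take hj1.
have hu1 : prefix u l1 := prefix_trans (prefix_take _ _) hp1.
have hu2 : prefix u l2 by rewrite /u hj3; exact: prefix_trans (prefix_take _ _) hp2.
have hA1 : nth x0 c1 j \in A u.
  apply/memA; exists l1; split => //; first by rewrite hsu; apply: leq_trans hj1 (size_prefix hp1).
  by rewrite hsu (prefix_nth hp1 hj1).
have hA2 : nth x0 c2 j \in A u.
  apply/memA; exists l2; split => //; first by rewrite hsu; apply: leq_trans hj2 (size_prefix hp2).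
  by rewrite hsu (prefix_nth hp2 hj2).
have hnode : is_node T u.
  apply/orP; right; apply/orP; right.
  have := @uniq_leq_size _ [:: nth x0 c1 j; nth x0 c2 j] (A u).
  rewrite /= inE hj4 /=; apply => // a; rewrite !inE => /orP [/eqP ->|/eqP ->] //.
have huN : u \in N.
  rewrite mem_filter hnode /=; apply/mem_loci; exists l1, j; split => //.
    by apply: leq_trans (ltnW hj1) (size_prefix hp1).
  by move: hp1 => /prefixP [s ->]; rewrite take_cat hj1.
move/hasPn: hc1 => /(_ u huN); rewrite /sprefix hsu hvj hj1 prefix_take !andbT /=.
have -> : v = take (size v) c1 by move: hv1; rewrite prefixE => /eqP.
by rewrite /u -(@take_takel _ (size v) j c1) ?prefix_take // ltnW.
Qed.


Lemma sizeL : size L = size T.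
Proof. by rewrite /prev_suffixes size_map size_iota. Qed.

Lemma nl_le w : nl w <= size T.
Proof. by rewrite -sizeL; exact: count_size. Qed.

Lemma bound (Q : pred (seq (S + nat)%type)) m :
  (forall w, Q w -> m <= nl w) ->
  (forall v, Q v -> v \in N -> 2 <= count (fun a => m <= nl (rcons v a)) (A v)) ->
  m * count Q N <= size T.
Proof.
move=> h1 h2.
have hn : nl [::] = size T.
  by rewrite /nleaves (eq_count (a2 := predT)) ?count_predT ?sizeL // => l; rewrite prefix0s.
have hc : count (fun w => Q w && prefix [::] w) N = count Q N.
  by apply: eq_count => w; rewrite prefix0s andbT.
case: (leqP m (size T)) => h.
  have := main_ind h1 h2 (v := [::]); rewrite hn hc => /(_ h); nia.
have -> : count Q N = 0.
  apply/eqP; rewrite -leqn0 -(count_pred0 N) leq_eqVlt; apply/orP; left; apply/eqP.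
  apply: eq_count => w /=; apply/negbTE/negP => hq.
  have := h1 _ hq; have := nl_le w; lia.
by rewrite muln0.
Qed.

Lemma B_H2 v : is_branching_pnode T v -> v \in N ->
  2 <= count (fun a => maxn (sigmaT T) (piT T) <= nl (rcons v a)) (A v).
Proof.
move=> /andP [_ hc] hvN.
have hu : uniq [seq c <- children T v | is_pnode T c].
  exact/filter_uniq/filter_uniq/uniqN.
rewrite -size_filter in hc.
have hmem : forall c, c \in [seq c <- children T v | is_pnode T c] ->
    nth x0 c (size v) \in [seq a <- A v | maxn (sigmaT T) (piT T) <= nl (rcons v a)].
  move=> c; rewrite mem_filter => /andP [hp hch].
  have [hN /andP [hv hs] _] := children_mem hch.
  have [l hl hcl] := N_leaf hN.
  have hpr : prefix (rcons v (nth x0 c (size v))) c := prefix_rcons_nth hv hs.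
  rewrite mem_filter; apply/andP; split.
    by apply: leq_trans hp (nl_mono hpr).
  apply/memA; exists l; split => //; first exact: prefix_trans hv hcl.
    by apply: leq_trans hs (size_prefix hcl).
  by rewrite (prefix_nth hcl hs).
case E: [seq c <- children T v | is_pnode T c] hc hu hmem => [|c1 [|c2 s]] //= _.
move=> /andP [hn1 _] hmem.
have hc1 : c1 \in [:: c1, c2 & s] by rewrite mem_head.
have hc2 : c2 \in [:: c1, c2 & s] by rewrite !inE eqxx orbT.
have h1 := hmem c1 hc1.
have h2 := hmem c2 hc2.
have hne : c1 != c2 by move: hn1; rewrite inE negb_or => /andP [].
have hch : forall c, c \in [:: c1, c2 & s] -> c \in children T v.
  by move=> c; rewrite -E mem_filter => /andP [].
have hd := child_diff (hch c1 hc1) (hch c2 hc2) hne.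
rewrite -size_filter.
have := @uniq_leq_size _ [:: nth x0 c1 (size v); nth x0 c2 (size v)]
  [seq a <- A v | maxn (sigmaT T) (piT T) <= nl (rcons v a)].
rewrite /= inE hd /=; apply => // a; rewrite !inE => /orP [/eqP ->|/eqP ->] //.
Qed.


Lemma space_bound : 0 < size T -> pstray_space T <= 7 * size T.
Proof.
move=> hn.
set m := maxn (sigmaT T) (piT T).
have hB : m * count (is_branching_pnode T) N <= size T.
  apply: bound; last exact: B_H2.
  by move=> w /andP [].
set Q := fun x : seq (S + nat)%type => 2 <= size (A x).
have hQ : 1 * count Q N <= size T.
  apply: bound.
    move=> w; rewrite /Q; case hA: (A w) => [|a s] //= _.
    have ha : a \in A w by rewrite hA mem_head.
    apply: leq_trans (memA_nl ha) (nl_mono (prefix_rcons _ _)).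
  move=> v hv _; rewrite (eq_in_count (a2 := predT)) ?count_predT //.
  by move=> a ha; rewrite /= memA_nl.
have hN : size N <= 1 + size T + size T.
  rewrite -count_predT.
  apply: leq_trans (count_le3 (P1 := fun x => x == [::]) (P2 := fun x => x \in L) (P3 := Q) _) _.
    by move=> x; rewrite mem_filter => /andP [hx _] _.
  have c1 : count (fun x => x == [::]) N <= 1.
    by rewrite -[X in X <= _]/(count_mem [::] N) count_uniq_mem ?uniqN // leq_b1.
  have c2 : count (fun x => x \in L) N <= size T.
    rewrite -size_filter -sizeL; apply: uniq_leq_size; first exact/filter_uniq/uniqN.
    by move=> x; rewrite mem_filter => /andP [].
  rewrite mul1n in hQ; exact: leq_add (leq_add c1 c2) hQ.
have hs : sigmaT T + piT T <= 2 * m by rewrite /m; have := leq_maxl (sigmaT T) (piT T); have := leq_maxr (sigmaT T) (piT T); lia.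
rewrite /pstray_space.
have : count (is_branching_pnode T) N * (sigmaT T + piT T) <= 2 * size T.
  apply: leq_trans (leq_mul (leqnn _) hs) _; nia.
lia.
Qed.

End S.

Theorem mainTheorem2 :
  exists c : nat,
    forall (dP dS : Order.disp_t) (P : orderType dP) (S : orderType dS)
           (T : seq (@pchar _ _ P S)) (dollar : S),
      valid_text T dollar ->
      (pstray_space T <= c * size T)%N.
Proof.
exists 7 => dP dS P S T dollar [T0 [hT _ _]].
apply: space_bound; by rewrite hT size_rcons.
Qed.
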